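(* For every $m\ge 0$, $$(1-x)a_{m+1}(x)=-2(1+x)(mx-2m+x-1)a_m(x)-2x(1+x)^2a_m'(x)+x(4mx-x-3)b_m(x)-4x^2(1+x)b_m'(x),$$ $$(x-1)b_{m+1}(x)=(4mx+x-1)a_m(x)-4x(1+x)a_m'(x)+(6mx-4m+x-3)(x+1)b_m(x)-2x(1+x)^2b_m'(x).$$
   Context: $P_m(x)=\sum_{i=0}^m d_i(m)x^i$ with $d_i(m)=2^{-2m}\sum_{k=i}^m 2^k\binom{2m-2k}{m-k}\binom{m+k}{k}\binom{k}{i}$; $Q_m(x)=2^m m!\,x^mP_m(1/x)$ (degree $m$). $(a_m(x),b_m(x))$ is the symmetric decomposition of $Q_m$: $a_m(x)=\frac{Q_m(x)-x^{m+1}Q_m(1/x)}{1-x}$, $b_m(x)=\frac{x^mQ_m(1/x)-Q_m(x)}{1-x}$, so $Q_m(x)=a_m(x)+xb_m(x)$. *)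

(* Defs.v *)
From mathcomp Require Import all_boot all_order all_algebra.
Set Implicit Arguments. Unset Strict Implicit. Unset Printing Implicit Defensive.
Import Order.TTheory GRing.Theory Num.Theory.
Local Open Scope ring_scope.

Definition dcoef (m i : nat) : rat :=
  (2%:R ^+ (2 * m))^-1 *
  \sum_(i <= k < m.+1)
     (2 ^ k * 'C(2 * m - 2 * k, m - k) * 'C(m + k, k) * 'C(k, i))%N%:R.

Definition Ppoly (m : nat) : {poly rat} := \poly_(i < m.+1) dcoef m i.

(* Q_m(x) = 2^m m! x^m P_m(1/x) = 2^m m! sum_i d_i(m) x^(m-i) *)
Definition Qpoly (m : nat) : {poly rat} :=
  \poly_(j < m.+1) ((2 ^ m * m`!)%N%:R * (Ppoly m)`_(m - j)).

(* x^m Q_m(1/x) (Q_m has degree <= m) *)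
Definition Qrev (m : nat) : {poly rat} := \poly_(j < m.+1) (Qpoly m)`_(m - j).

(* a_m(x) = (Q_m(x) - x^{m+1} Q_m(1/x)) / (1 - x)  (exact division) *)
Definition apoly (m : nat) : {poly rat} := (Qpoly m - 'X * Qrev m) %/ (1 - 'X).

(* b_m(x) = (x^m Q_m(1/x) - Q_m(x)) / (1 - x)  (exact division) *)
Definition bpoly (m : nat) : {poly rat} := (Qrev m - Qpoly m) %/ (1 - 'X).

(* Main.v *)
Require Import Defs.
From mathcomp Require Import all_boot all_order all_algebra.
From mathcomp Require Import ring lra zify.
Import Order.TTheory GRing.Theory Num.Theory.
Local Open Scope ring_scope.


Lemma cbin n : (n.+1 * 'C(2 * n.+1, n.+1) = 2 * (2 * n).+1 * 'C(2 * n, n))%N.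
Proof.
have e1 := mul_bin_diag (2 * n.+1) n.
rewrite (_ : (2 * n.+1).-1 = (2 * n).+1) in e1; last by lia.
have e2 := mul_bin_down (2 * n).+1 n.
rewrite /= in e2.
nia.
Qed.

Definition S (m k : nat) : nat := (2 ^ k * 'C(2 * m - 2 * k, m - k) * 'C(m + k, k))%N.
Definition s (m k : nat) : rat := (S m k)%:R.

Lemma S_nk n k : S (n + k) k = (2 ^ k * 'C(2 * n, n) * 'C(n + 2 * k, k))%N.
Proof.
rewrite /S (_ : 2 * (n + k) - 2 * k = 2 * n)%N; last by lia.
rewrite (_ : n + k - k = n)%N; last by lia.
by rewrite (_ : n + k + k = n + 2 * k)%N; last by lia.
Qed.

Lemma solve_eq {x y c : rat} : c != 0 -> c * x = y -> x = y / c.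
Proof. by move=> hc <-; field. Qed.

Lemma castE {a b : nat} : a = b -> a%:R = b%:R :> rat.
Proof. by move=> ->. Qed.

Lemma Lt m k : (k <= m.+1)%N ->
 (2 * m.+1)%N%:R * s m.+1 k = 4%:R * ((2 * m + 2 * k)%N%:R * (if k is k'.+1 then s m k' else 0)
     + ((2 * m).+1%N%:R - (2 * k)%N%:R) * (if (k <= m)%N then s m k else 0)).
Proof.
case: k => [|j] hk.
  rewrite /s /S !muln0 !subn0 !addn0 /=.
  rewrite !expn0 !bin0 !mul1n !muln1 mulr0 add0r subr0.
  have := castE (cbin m); rewrite !natrM => h.
  rewrite -mulrA h; ring.
case: (ltnP j m) => hjm.
  have [n hn] : exists n, m = (n + j.+1)%N by exists (m - j.+1)%N; lia.
  subst m.
  rewrite /s (_ : (n + j.+1).+1 = n.+1 + j.+1)%N; last by lia.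
  rewrite S_nk S_nk (_ : (n + j.+1 = n.+1 + j)%N); last by lia.
  rewrite S_nk.
  set A' := 'C(2 * n.+1, n.+1).
  set A := 'C(2 * n, n).
  set N := (n + 2 * j.+1)%N.
  set B := 'C(N, j.+1).
  have hA := castE (cbin n); rewrite -/A' -/A !natrM in hA.
  have hB2 := castE (mul_bin_diag N j); rewrite -/B in hB2.
  have hB1 := castE (mul_bin_down N.+1 j.+1); rewrite /= -/B in hB1.
  rewrite (_ : (n.+1 + 2 * j)%N = N.-1); last by rewrite /N; lia.
  rewrite (_ : (n.+1 + 2 * j.+1)%N = N.+1); last by rewrite /N; lia.
  rewrite !natrM in hB1 hB2.
  rewrite (_ : (N.+1 - j.+1)%N = (n + j.+1).+1) in hB1; last by rewrite /N; lia.
  have nz1 : (2 * (2 * n).+1%:R : rat) != 0 by rewrite mulf_neq0 // pnatr_eq0.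
  have nz2 : (N%:R : rat) != 0 by rewrite pnatr_eq0 /N; lia.
  have nz3 : ((n + j.+1).+1%:R : rat) != 0 by rewrite pnatr_eq0.
  have eA := solve_eq nz1 (esym hA).
  have eB2 := solve_eq nz2 hB2.
  have eC := solve_eq nz3 (esym hB1).
  rewrite !natrM !natrX eA eB2 eC.
  generalize (A'%:R : rat) (B%:R : rat) => a b.
  rewrite exprS.
  generalize (2%:R ^+ j : rat) => p.
  rewrite /N in nz2 *.
  field.
  have h0 := ler0n rat n; have h1 := ler0n rat j.
  by apply/and3P; split; apply: lt0r_neq0; lra.
have ejm : j = m by lia.
subst j; rewrite mulr0 addr0 /s /S !subnn !bin0 !muln1 !addnn -!mul2n.
have := castE (cbin m); rewrite !natrM => h.
have nz : (m.+1%:R : rat) != 0 by rewrite pnatr_eq0.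
rewrite ?natrM !natrX (solve_eq nz h).
generalize ('C(2 * m, m)%:R : rat) => c.
rewrite exprS; generalize (2%:R ^+ m : rat) => p.
field.
by have h0 := ler0n rat m; apply: lt0r_neq0; lra.
Qed.

Lemma binrel k j : (k * 'C(k, j) = j * 'C(k, j) + j.+1 * 'C(k, j.+1))%N.
Proof.
rewrite mul_bin_left; case: (leqP j k) => h.
  rewrite -mulnDl subnKC //.
by rewrite bin_small // !muln0.
Qed.

Definition D (m i : nat) : rat := \sum_(k < m.+1) s m k * ('C(k, i))%:R.

Lemma dcoefE m i : dcoef m i = (2%:R ^+ (2 * m))^-1 * D m i.
Proof.
rewrite /dcoef /D; congr (_ * _).
rewrite /s; under [RHS]eq_bigr do rewrite -natrM.
rewrite -(big_mkord xpredT (fun k => (S m k * 'C(k, i))%N%:R)).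
case: (leqP i m.+1) => hi.
  rewrite [RHS](big_cat_nat (leq0n i) hi) /= [X in _ = X + _]big1_seq ?add0r //.
  move=> k /andP[_]; rewrite mem_iota add0n subn0 => /andP[_ hk].
  by rewrite bin_small // muln0.
rewrite [LHS]big_geq; last exact: ltnW hi.
rewrite [RHS]big1_seq // => k /andP[_]; rewrite mem_iota add0n => /andP[_ hk].
rewrite bin_small ?muln0 //; lia.
Qed.

Lemma drec m i : (2 * m.+1)%N%:R * D m.+1 i =
  4%:R * ((if i is j.+1 then (2 * m + 2 * i)%N%:R * D m j else 0)
          + (4 * m + 3 + 2 * i)%N%:R * D m i).
Proof.
rewrite /D mulr_sumr.
rewrite (eq_bigr (fun k : 'I_(m.+2) => 4%:R * (((2 * m + 2 * k)%N%:R * (if (k:nat) is k'.+1 then s m k' else 0)) * 'C(k,i)%:R + ((2 * m).+1%N%:R - (2 * k)%N%:R) * (if (k <= m)%N then s m k else 0) * 'C(k,i)%:R))); last first.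
  move=> k _; rewrite mulrA Lt; last exact: ltn_ord k.
  set v := match _ with 0%N => _ | _.+1 => _ end; set u := if _ then _ else _; ring.
rewrite -mulr_sumr big_split /= big_ord_recl [X in _ * (_ + X)]big_ord_recr /=.
rewrite ltnn !mulr0 !mul0r !addr0 !add0r -big_split /=.
case: i => [|j].
  rewrite add0r; congr (_ * _); rewrite mulr_sumr; apply: eq_bigr => k _.
  have hk : (k <= m)%N := ltn_ord k.
  rewrite hk /bump leq0n add1n add0n !bin0.
  ring.
congr (_ * _); rewrite !mulr_sumr -big_split /=; apply: eq_bigr => k _.
have hk : (k <= m)%N := ltn_ord k.
rewrite hk /bump leq0n add1n add0n binS.
have h := castE (binrel k j); rewrite !natrD !natrM in h.
have h' : j.+1%:R * 'C(k,j.+1)%:R = k%:R * 'C(k,j)%:R - j%:R * 'C(k,j)%:R :> rat.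
  by rewrite h; ring.
have nz : (j.+1%:R : rat) != 0 by rewrite pnatr_eq0.
rewrite [('C(k, j.+1) + _)%:R]natrD (solve_eq nz h').
move: ('C(k, j)) (s m k) => c0 sk.
field.
by have h0 := ler0n rat j; apply: lt0r_neq0; lra.
Qed.

Definition cc m : rat := (2 ^ m * m`!)%N%:R.
Definition E m i : rat := cc m * dcoef m i.

Lemma dcoef_big m i : (m < i)%N -> dcoef m i = 0.
Proof. by move=> h; rewrite /dcoef big_geq ?mulr0. Qed.

Lemma Pcoef m i : (Ppoly m)`_i = dcoef m i.
Proof.
rewrite /Ppoly coef_poly; case: ifP => // /negbT; rewrite -leqNgt => h.
by rewrite dcoef_big.
Qed.

Lemma Qcoef m j : (Qpoly m)`_j = if (j <= m)%N then E m (m - j) else 0.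
Proof. by rewrite /Qpoly coef_poly Pcoef. Qed.

Lemma Rcoef m i : (Qrev m)`_i = E m i.
Proof.
rewrite /Qrev coef_poly Qcoef leq_subr ltnS; case: leqP => h.
  by rewrite subKn.
by rewrite /E dcoef_big ?mulr0.
Qed.

Lemma Erec m i : E m.+1 i =
  (if i is j.+1 then (2 * m + 2 * i)%N%:R * E m j else 0) + (4 * m + 3 + 2 * i)%N%:R * E m i.
Proof.
have h := drec m i.
have nz : ((2 * m.+1)%N%:R : rat) != 0 by rewrite pnatr_eq0 muln_eq0.
have e : (2%:R ^+ (2 * m.+1) : rat) = 4%:R * 2%:R ^+ (2 * m).
  by rewrite mulnS !exprS; ring.
have pz : (2%:R ^+ (2 * m) : rat) != 0 by rewrite expf_neq0 // pnatr_eq0.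
have h0 := ler0n rat m.
case: i h => [|j] h; rewrite /E !dcoefE /cc (solve_eq nz h) e factS expnS !natrM.
  move: pz; move: (2%:R ^+ (2 * m) : rat) ((2 ^ m)%N%:R : rat) (m`!%:R : rat) (D m 0) => p q f d0 pz.
  by field; rewrite pz /=; apply: lt0r_neq0; lra.
move: pz; move: (2%:R ^+ (2 * m) : rat) ((2 ^ m)%N%:R : rat) (m`!%:R : rat) (D m j) (D m j.+1) => p q f d1 d2 pz.
by field; rewrite pz /=; apply: lt0r_neq0; lra.
Qed.
Lemma ifS (T : Type) n (a b : T) : (if n.+1 == 0%N then a else b) = b. Proof. by []. Qed.
Lemma if0 (T : Type) (a b : T) : (if 0%N == 0%N then a else b) = a. Proof. by []. Qed.

Lemma Rrec m : Qrev m.+1 = (2 * m.+1)%N%:R * ('X * Qrev m) + (4 * m + 3)%N%:R * Qrev m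
   + 2%:R * ('X * ('X * (Qrev m)^`())) + 2%:R * ('X * (Qrev m)^`()).
Proof.
apply/polyP => i.
rewrite !coefD !mulr_natl !coefMn !coefXM !coef_deriv !Rcoef Erec.
move: (E m) => Em.
case: i => [|[|i]] /=.
all: ring.

Qed.

Lemma E_big m i : (m < i)%N -> E m i = 0.
Proof. by move=> h; rewrite /E dcoef_big ?mulr0. Qed.

Lemma ErecS m i : E m.+1 i.+1 = (2 * m + 2 * i.+1)%N%:R * E m i + (4 * m + 3 + 2 * i.+1)%N%:R * E m i.+1.
Proof. by rewrite Erec. Qed.
Lemma Erec0 m : E m.+1 0 = (4 * m + 3 + 2 * 0)%N%:R * E m 0.
Proof. by rewrite Erec add0r. Qed.

Lemma Qrec m : Qpoly m.+1 + 2%:R * ('X * (Qpoly m)^`()) + 2%:R * ('X * ('X * (Qpoly m)^`()))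
   = (4 * m + 2)%N%:R * Qpoly m + (6 * m + 3)%N%:R * ('X * Qpoly m).
Proof.
apply/polyP => j.
rewrite !coefD !mulr_natl !coefMn !coefXM !coef_deriv !Qcoef.
case: j => [|j] /=.
  rewrite !subn0 ErecS (@E_big m m.+1 (ltnSn m)).
  by move: (E m) => Em; ring.
case: (leqP j m) => hj; last first.
  rewrite !ifF; try lia.
  by case: j hj => [|j] hj /=; rewrite ?ifF; try lia; ring.
have [n ?] : exists n, m = (n + j)%N by exists (m - j)%N; lia.
subst m.
clear hj; case: n => [|n]; case: j => [|j] /=;
  repeat match goal with |- context[if ?b then _ else _] => let h := fresh in case: (boolP b) => h; try (exfalso; lia) end.
- rewrite (_ : ((0 + 0).+1 - 1 = 0)%N) // (_ : (0 + 0 - 0 = 0)%N) // Erec0.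
  by move: (E (0 + 0)%N) => Em; ring.
- rewrite (_ : ((0 + j.+1).+1 - j.+2 = 0)%N); last lia.
  rewrite (_ : (0 + j.+1 - j.+1 = 0)%N); last lia.
  rewrite Erec0.
  by move: (E (0 + j.+1)%N) => Em; ring.
- rewrite (_ : ((n.+1 + 0).+1 - 1 = n.+1)%N); last lia.
  rewrite (_ : (n.+1 + 0 - 1 = n)%N); last lia.
  rewrite (_ : (n.+1 + 0 - 0 = n.+1)%N); last lia.
  rewrite ErecS.
  by move: (E (n.+1 + 0)%N) => Em; ring.
- rewrite (_ : ((n.+1 + j.+1).+1 - j.+2 = n.+1)%N); last lia.
  rewrite (_ : (n.+1 + j.+1 - j.+2 = n)%N); last lia.
  rewrite (_ : (n.+1 + j.+1 - j.+1 = n.+1)%N); last lia.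
  rewrite ErecS.
  by move: (E (n.+1 + j.+1)%N) => Em; ring.
Qed.

Lemma QR1 m : (Qpoly m).[1] = (Qrev m).[1].
Proof.
rewrite [RHS]horner_poly (horner_coef_wide _ (size_poly _ _)).
rewrite (reindex_inj rev_ord_inj) /=; apply: eq_bigr => i _.
by rewrite !expr1n !mulr1 subSS.
Qed.

Lemma dvdQR m : (1 - 'X) %| (Qpoly m - 'X * Qrev m).
Proof.
have : root (Qpoly m - 'X * Qrev m) 1.
  by rewrite /root hornerD hornerN hornerM hornerX QR1 mul1r subrr.
case/factor_theorem => q hq; apply/dvdpP; exists (- q).
by rewrite hq polyC1; ring.
Qed.

Lemma dvdRQ m : (1 - 'X) %| (Qrev m - Qpoly m).
Proof.
have : root (Qrev m - Qpoly m) 1.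
  by rewrite /root hornerD hornerN QR1 subrr.
case/factor_theorem => q hq; apply/dvdpP; exists (- q).
by rewrite hq polyC1; ring.
Qed.

Lemma FA m : (1 - 'X) * apoly m = Qpoly m - 'X * Qrev m.
Proof. by rewrite mulrC divpK // dvdQR. Qed.

Lemma FB m : (1 - 'X) * bpoly m = Qrev m - Qpoly m.
Proof. by rewrite mulrC divpK // dvdRQ. Qed.

Lemma d1 : (1 : {poly rat})^`() = 0.
Proof. by rewrite -polyC1 derivC. Qed.

Lemma DA m : (1 - 'X) ^+ 2 * (apoly m)^`() =
  (1 - 'X) * ((Qpoly m)^`() - Qrev m - 'X * (Qrev m)^`()) + (Qpoly m - 'X * Qrev m).
Proof.
have h := congr1 deriv (FA m); rewrite !(derivM, derivB, derivX, d1) in h.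
rewrite -FA.
have -> : (1 - 'X) ^+ 2 * (apoly m)^`() = (1 - 'X) * (((0 - 1) * apoly m + (1 - 'X) * (apoly m)^`()) + apoly m) by ring.
rewrite h; ring.
Qed.

Lemma DB m : (1 - 'X) ^+ 2 * (bpoly m)^`() =
  (1 - 'X) * ((Qrev m)^`() - (Qpoly m)^`()) + (Qrev m - Qpoly m).
Proof.
have h := congr1 deriv (FB m); rewrite !(derivM, derivB, derivX, d1) in h.
rewrite -FB.
have -> : (1 - 'X) ^+ 2 * (bpoly m)^`() = (1 - 'X) * (((0 - 1) * bpoly m + (1 - 'X) * (bpoly m)^`()) + bpoly m) by ring.
rewrite h; ring.
Qed.

Lemma key {u a a' b b' A A' B B' al be ga de : {poly rat}} :
  u * a = A -> u ^+ 2 * a' = A' -> u * b = B -> u ^+ 2 * b' = B' ->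
  u ^+ 2 * (al * a + be * a' + ga * b + de * b') = al * u * A + be * A' + ga * u * B + de * B'.
Proof. by move=> <- <- <- <-; ring. Qed.

Lemma unz : ((1 - 'X) ^+ 2 : {poly rat}) != 0.
Proof.
rewrite expf_neq0 // subr_eq0; apply/eqP => h.
have := congr1 (fun p : {poly rat} => p`_1) h.
by rewrite coefX coef1.
Qed.

Theorem lemma3p1 (m : nat) :
  (1 - 'X) * apoly m.+1 =
    - 2%:R * (1 + 'X) * (m%:R * 'X - (2 * m)%:R + 'X - 1) * apoly m
    - 2%:R * 'X * (1 + 'X) ^+ 2 * (apoly m)^`()
    + 'X * (4%:R * m%:R * 'X - 'X - 3%:R) * bpoly m
    - 4%:R * 'X ^+ 2 * (1 + 'X) * (bpoly m)^`()
  /\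
  ('X - 1) * bpoly m.+1 =
    (4%:R * m%:R * 'X + 'X - 1) * apoly m
    - 4%:R * 'X * (1 + 'X) * (apoly m)^`()
    + (6%:R * m%:R * 'X - 4%:R * m%:R + 'X - 3%:R) * ('X + 1) * bpoly m
    - 2%:R * 'X * (1 + 'X) ^+ 2 * (bpoly m)^`().
Proof.
have q1 : Qpoly m.+1 = (4 * m + 2)%N%:R * Qpoly m + (6 * m + 3)%N%:R * ('X * Qpoly m)
   - 2%:R * ('X * (Qpoly m)^`()) - 2%:R * ('X * ('X * (Qpoly m)^`()))
  by rewrite -Qrec; ring.
have r1 := Rrec m.
have e2m : ((2 * m)%:R : {poly rat}) = 2%:R * m%:R by rewrite natrM.
split; apply: (mulfI unz).
- rewrite FA.
  have -> : - 2%:R * (1 + 'X) * (m%:R * 'X - (2 * m)%:R + 'X - 1) * apoly m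
    - 2%:R * 'X * (1 + 'X) ^+ 2 * (apoly m)^`()
    + 'X * (4%:R * m%:R * 'X - 'X - 3%:R) * bpoly m
    - 4%:R * 'X ^+ 2 * (1 + 'X) * (bpoly m)^`() =
    (- 2%:R * (1 + 'X) * (m%:R * 'X - (2 * m)%:R + 'X - 1)) * apoly m
    + (- 2%:R * 'X * (1 + 'X) ^+ 2) * (apoly m)^`()
    + ('X * (4%:R * m%:R * 'X - 'X - 3%:R)) * bpoly m
    + (- 4%:R * 'X ^+ 2 * (1 + 'X)) * (bpoly m)^`() by ring.
  rewrite (key (FA m) (DA m) (FB m) (DB m)) q1 r1 e2m.
  move: (Qpoly m) (Qrev m) ((Qpoly m)^`()) ((Qrev m)^`()) => Q R Q' R'.
  ring.
- have -> : ('X - 1) * bpoly m.+1 = - ((1 - 'X) * bpoly m.+1) by ring.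
  rewrite FB.
  have -> : (4%:R * m%:R * 'X + 'X - 1) * apoly m
    - 4%:R * 'X * (1 + 'X) * (apoly m)^`()
    + (6%:R * m%:R * 'X - 4%:R * m%:R + 'X - 3%:R) * ('X + 1) * bpoly m
    - 2%:R * 'X * (1 + 'X) ^+ 2 * (bpoly m)^`() =
    (4%:R * m%:R * 'X + 'X - 1) * apoly m
    + (- 4%:R * 'X * (1 + 'X)) * (apoly m)^`()
    + ((6%:R * m%:R * 'X - 4%:R * m%:R + 'X - 3%:R) * ('X + 1)) * bpoly m
    + (- 2%:R * 'X * (1 + 'X) ^+ 2) * (bpoly m)^`() by ring.
  rewrite (key (FA m) (DA m) (FB m) (DB m)) q1 r1.
  move: (Qpoly m) (Qrev m) ((Qpoly m)^`()) ((Qrev m)^`()) => Q R Q' R'.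
  ring.
Qed.
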